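(* On $U$, for each $i=1,\dots,n$ let $\Psi_i\neq0$ be a (column) eigenvector with $L\Psi_i=\lambda_i\Psi_i$. Then $\mathbf{e}^T\Psi_i\neq0$ and $$\tilde\mu_i:=\left.\frac{\mathbf{x}^T(\lambda-L)^\vee\mathbf{e}}{\mathbf{e}^T(\lambda-L)^\vee\mathbf{e}}\right|_{\lambda=\lambda_i}=\frac{\mathbf{x}^T\Psi_i}{\mathbf{e}^T\Psi_i}.$$
   Context: Fix $n\ge1$. On the open subset of $\mathbb{R}^{2n}$ with coordinates $(x_1,\dots,x_n,p_1,\dots,p_n)$ where the $x_i$ are pairwise distinct, let $L$ be the $n\times n$ matrix with $L_{ij}=p_i\delta_{ij}+(1-\delta_{ij})/(x_i-x_j)$. $A^\vee$ denotes the adjugate of a square matrix $A$. $\mathbf{e}=(1,\dots,1)^T$, $\mathbf{x}=(x_1,\dots,x_n)^T$. $U$ is an open set on which $L$ has $n$ pairwise distinct real eigenvalues $\lambda_1,\dots,\lambda_n$. *)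

(* Defs.v *)
From HB Require Import structures.
From mathcomp Require Import all_boot all_order all_algebra.
Set Implicit Arguments. Unset Strict Implicit. Unset Printing Implicit Defensive.
Import Order.TTheory GRing.Theory Num.Theory.
Local Open Scope ring_scope.

Definition Lmat (R : fieldType) (n : nat) (x p : 'cV[R]_n) : 'M[R]_n :=
  \matrix_(i, j) (if i == j then p i 0 else (x i 0 - x j 0)^-1).

Definition evec (R : fieldType) (n : nat) : 'cV[R]_n := const_mx 1.

Definition sc (R : fieldType) (M : 'M[R]_1) : R := M 0 0.

(* Main.v *)
Require Import Defs.
From HB Require Import structures.
From mathcomp Require Import all_boot all_order all_algebra.
Import Order.TTheory GRing.Theory Num.Theory.
Local Open Scope ring_scope.

Lemma adj_eig (R : fieldType) n (M : 'M[R]_n) (l : R) (w : 'cV[R]_n) :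
  root (char_poly M) l -> M *m w = l *: w ->
  \adj (l%:M - M) *m w = (char_poly M %/ ('X - l%:P)).[l] *: w.
Proof.
move=> rt Mw.
set q := char_poly M %/ ('X - l%:P).
have chq : char_poly M = q * ('X - l%:P) by rewrite divpK // -root_factor_theorem.
pose W := map_mx (@polyC R) w.
have PW : char_poly_mx M *m W = ('X - l%:P) *: W.
  rewrite /char_poly_mx mulmxBl mul_scalar_mx /W -map_mxM Mw map_mxZ /=.
  by rewrite scalerBl.
have key : \adj (char_poly_mx M) *m W = q *: W.
  have := congr1 (fun X => X *m W) (mul_adj_mx (char_poly_mx M)).
  rewrite /= -mulmxA PW -scalemxAr mul_scalar_mx.
  rewrite -/(char_poly M) chq mulrC -scalerA => /eqP.
  rewrite -subr_eq0 -scalerBr scalemx_eq0 polyXsubC_eq0 /= subr_eq0.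
  by move/eqP.
have := congr1 (map_mx (horner_eval l)) key.
rewrite map_mxM map_mx_adj map_mxZ /W -map_mx_comp.
have -> : map_mx (horner_eval l) (char_poly_mx M) = l%:M - M.
  apply/matrixP => i j; rewrite !mxE /horner_evalE.
  by rewrite rmorphB rmorphMn /= !horner_evalE hornerX hornerC.
have E : forall v : 'cV[R]_n, map_mx (horner_eval l \o polyC) v = v.
  by move=> v; apply/matrixP => i j; rewrite !mxE /= horner_evalE hornerC.
by rewrite !E.
Qed.

Lemma char_poly_tr (R : fieldType) n (M : 'M[R]_n) : char_poly M^T = char_poly M.
Proof.
rewrite /char_poly -det_tr; congr (\det _).
by apply/matrixP => i j; rewrite !mxE eq_sym.
Qed.

Lemma comm_id (R : fieldType) n (x p : 'cV[R]_n) :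
  (forall a b : 'I_n, a != b -> x a 0 != x b 0) ->
  diag_mx x^T *m Lmat x p - Lmat x p *m diag_mx x^T
  = evec R n *m (evec R n)^T - 1%:M.
Proof.
move=> xd; apply/matrixP => a b.
rewrite mul_diag_mx mul_mx_diag !mxE big_ord1 !mxE.
case: eqVneq => [->|ab]; first by rewrite mulrC subrr mulr1 subrr.
rewrite mulr1 mulr0n subr0 mulrC -mulrBr mulVf //.
by rewrite subr_eq0; apply: xd.
Qed.

Lemma sc_sub (R : fieldType) (M N : 'M[R]_1) : sc (M - N) = sc M - sc N.
Proof. by rewrite /sc !mxE. Qed.
Lemma sc_scale (R : fieldType) a (M : 'M[R]_1) : sc (a *: M) = a * sc M.
Proof. by rewrite /sc !mxE. Qed.

Theorem mainTheorem10 (R : realFieldType) (n : nat) (x p : 'cV[R]_n)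
  (lam : 'I_n -> R) (i : 'I_n) (Psi : 'cV[R]_n) :
  (0 < n)%N ->
  (forall a b : 'I_n, a != b -> x a 0 != x b 0) ->
  injective lam ->
  (forall k : 'I_n, eigenvalue (Lmat x p) (lam k)) ->
  Psi != 0 ->
  Lmat x p *m Psi = lam i *: Psi ->
  sc ((evec R n)^T *m Psi) != 0 /\
  sc ((evec R n)^T *m \adj ((lam i)%:M - Lmat x p) *m evec R n) != 0 /\
  sc (x^T *m \adj ((lam i)%:M - Lmat x p) *m evec R n)
    / sc ((evec R n)^T *m \adj ((lam i)%:M - Lmat x p) *m evec R n)
  = sc (x^T *m Psi) / sc ((evec R n)^T *m Psi).
Proof.
move=> n0 xd linj eig Psi0 LPsi.
have comm := @comm_id _ _ x p xd.
set L := Lmat x p in comm LPsi eig *.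
set e := evec R n in comm *.
set l := lam i in LPsi *.
set X := diag_mx x^T in comm.
set A := l%:M - L. set B := \adj A.
have rt : forall k, root (char_poly L) (lam k).
  by move=> k; rewrite -eigenvalue_root_char.
set c := (char_poly L %/ ('X - l%:P)).[l].
have Beig : forall w : 'cV_n, L *m w = l *: w -> B *m w = c *: w.
  by move=> w Lw; apply: (@adj_eig _ _ L l w (rt i) Lw).
have Beigr : forall r : 'rV_n, r *m L = l *: r -> r *m B = c *: r.
  move=> r rL; apply: trmx_inj.
  rewrite trmx_mul /B trmx_adj linearB /= tr_scalar_mx linearZ /=.
  rewrite /c -(@char_poly_tr _ _ L); apply: (@adj_eig _ _ L^T l r^T).
    by rewrite (@char_poly_tr _ _ L); exact: rt.
  by have := congr1 trmx rL; rewrite trmx_mul linearZ.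
have cneq : c != 0.
  rewrite /c; set q := char_poly L %/ ('X - l%:P).
  have chq : char_poly L = q * ('X - l%:P).
    by rewrite divpK // -root_factor_theorem; exact: rt.
  have q0 : q != 0.
    apply/eqP => q0; move: (char_poly_monic L); rewrite chq q0 mul0r.
    by move/monic_neq0; rewrite eqxx.
  have szq : size q = n.
    have := size_char_poly L; rewrite chq size_Mmonic ?monicXsubC // size_XsubC.
    by rewrite addn2 /= => -[].
  apply/negP => /eqP c0.
  have allr : all (root q) [seq lam k | k <- enum 'I_n].
    apply/allP => z /mapP [k _ ->].
    have [->|ki] := eqVneq k i; first by apply/eqP.
    have := rt k; rewrite chq rootM root_XsubC.
    case/orP => // /eqP /linj /eqP; by rewrite (negPf ki).
  have := max_poly_roots q0 allr.
  rewrite map_inj_uniq ?enum_uniq // size_map size_enum_ord szq ltnn.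
  by move/(_ isT).
have AP : A *m Psi = 0 by rewrite mulmxBl mul_scalar_mx LPsi subrr.
have detA : \det A = 0.
  apply/eqP; rewrite -det_tr; apply/det0P; exists Psi^T; first by rewrite trmx_eq0.
  by rewrite -trmx_mul AP trmx0.
have AB : A *m B = 0 by rewrite mul_mx_adj detA raddf0.
have BA : B *m A = 0 by rewrite mul_adj_mx detA raddf0.
have Aw : forall w : 'cV_n, A *m w = l *: w - L *m w.
  by move=> w; rewrite mulmxBl mul_scalar_mx.
have rA : forall r : 'rV_n, r *m A = l *: r - r *m L.
  by move=> r; rewrite mulmxBr mul_mx_scalar.
have K : forall w : 'cV_n, L *m w = l *: w -> sc (e^T *m w) = 0 -> w = 0.
  move=> w Lw ew.
  have h : A *m (X *m w) = - w.
    have := congr1 (fun M => M *m w) comm; rewrite /= !mulmxBl -!mulmxA Lw.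
    rewrite -scalemxAr -Aw mul1mx [e^T *m w]mx11_scalar.
    rewrite -/(sc (e^T *m w)) ew raddf0 mulmx0 sub0r. by rewrite -mulmxBl.
  have := congr1 (mulmx B) h; rewrite !mulmxA BA mul0mx mulmxN Beig //.
  rewrite mul0mx => /eqP; rewrite eq_sym oppr_eq0 scalemx_eq0 (negPf cneq) /=.
  by move/eqP.
have K' : forall r : 'rV_n, r *m L = l *: r -> sc (r *m e) = 0 -> r = 0.
  move=> r rL re.
  have h : (r *m X) *m A = r.
    have := congr1 (mulmx r) comm; rewrite /= !mulmxBr !mulmxA rL.
    rewrite -scalemxAl => H.
    rewrite mul_mx_scalar -opprB H mulmx1 [r *m e]mx11_scalar.
    by rewrite -/(sc (r *m e)) re raddf0 mul0mx sub0r opprK.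
  have := congr1 (fun M => M *m B) h; rewrite /= -[r *m X *m A *m B]mulmxA AB mulmx0 Beigr //.
  move/eqP; rewrite eq_sym scalemx_eq0 (negPf cneq) /=.
  by move/eqP.
have eP : sc (e^T *m Psi) != 0.
  by apply/eqP => h; move: Psi0; rewrite (K _ LPsi h) eqxx.
set u := B *m e.
have Lu : L *m u = l *: u.
  have : A *m u = 0 by rewrite /u mulmxA AB mul0mx.
  by rewrite Aw => /eqP; rewrite subr_eq0 eq_sym => /eqP.
set phi := e^T *m B.
have Lphi : phi *m L = l *: phi.
  have : phi *m A = 0 by rewrite /phi -mulmxA BA mulmx0.
  by rewrite rA => /eqP; rewrite subr_eq0 eq_sym => /eqP.
have eu : sc (e^T *m u) != 0.
  apply/eqP => h.
  have phi0 : phi = 0 by apply: K' => //; rewrite /phi -mulmxA.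
  move: eP; have := congr1 (fun M => M *m Psi) phi0.
  rewrite /= mul0mx /phi -mulmxA Beig // -scalemxAr => /eqP.
  rewrite scalemx_eq0 (negPf cneq) /= => /eqP ->.
  by rewrite /sc mxE eqxx.
set w := sc (e^T *m Psi) *: u - sc (e^T *m u) *: Psi.
have Lw : L *m w = l *: w.
  rewrite /w mulmxBr -!scalemxAr Lu LPsi !scalerA scalerBr !scalerA.
  by rewrite [l * _]mulrC [l * sc (e^T *m u)]mulrC.
have w0 : w = 0.
  apply: K => //.
  by rewrite /w mulmxBr -!scalemxAr sc_sub !sc_scale mulrC subrr.
have := congr1 (mulmx x^T) w0.
rewrite mulmx0 /w mulmxBr -!scalemxAr => /(congr1 (@sc R)).
have sc0 : sc (0 : 'M[R]_1) = 0 by rewrite /sc mxE.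
rewrite sc_sub !sc_scale sc0 => /eqP; rewrite subr_eq0 => /eqP E.
split => //; rewrite -!mulmxA -/u; split => //.
by apply/eqP; rewrite eqr_div // mulrC E mulrC.
Qed.
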